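(* Let $\mathrm{M}$ be a (loopless) matroid of rank $d+1$. For nested index sets $J\subseteq J'\subseteq[d]$, \[ \frac{N_J(\mathrm{M})}{U_J}\le\frac{N_{J'}(\mathrm{M})}{U_{J'}}. \]
   Context: For $J=\{j_1<\cdots<j_m\}\subseteq[d]$, $N_J(\mathrm{M})$ is the number of chains of flats $G_1\subsetneq\cdots\subsetneq G_m$ of $\mathrm{M}$ with $\operatorname{rk}(G_\ell)=j_\ell$ (with $N_\varnothing=1$). $U_J:=N_J(\mathrm{U}_{d+1})$ for the Boolean matroid $\mathrm{U}_{d+1}$ on $d+1$ elements; explicitly $U_J=\frac{n_{m+1}(d+1)!}{\prod_{i=1}^{m+1}n_i!}$, where $n_1=j_1$, $n_\ell=j_\ell-j_{\ell-1}$ ($2\le\ell\le m$), $n_{m+1}=d+2-j_m$ (and $n_1=d+2$ if $J=\varnothing$). *)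

(* Defs.v *)
From mathcomp Require Import all_boot all_order all_algebra.
Set Implicit Arguments. Unset Strict Implicit. Unset Printing Implicit Defensive.

Record matroid (T : finType) := Matroid {
  mrank : {set T} -> nat;
  mrank_card : forall A, mrank A <= #|A|;
  mrank_mono : forall A B : {set T}, A \subset B -> mrank A <= mrank B;
  mrank_submod : forall A B : {set T}, mrank (A :|: B) + mrank (A :&: B) <= mrank A + mrank B
}.

Definition loopless (T : finType) (M : matroid T) : Prop :=
  forall e : T, mrank M [set e] = 1.

Definition is_flat (T : finType) (M : matroid T) (F : {set T}) : bool :=
  [forall e, (e \notin F) ==> (mrank M F < mrank M (e |: F))].

(* Index set J = {j_1 < ... < j_m} represented as a strictly increasing list. *)
Definition NJ (T : finType) (r : {set T} -> nat) (flat : {set T} -> bool)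
    (J : seq nat) : nat :=
  #|[set c : (size J).-tuple {set T} |
      [&& all flat (tval c), [seq r G | G <- tval c] == J &
          sorted (fun A B : {set T} => A \proper B) (tval c)]]|.

Definition N_J (T : finType) (M : matroid T) (J : seq nat) : nat :=
  NJ (mrank M) (is_flat M) J.

(* Boolean matroid U_{d+1} on d+1 elements: rank = cardinality, every set a flat. *)
Definition U_J (d : nat) (J : seq nat) : nat :=
  NJ (fun A : {set 'I_d.+1} => #|A|) (fun _ => true) J.

Definition index_set (d : nat) (J : seq nat) : bool :=
  sorted ltn J && all (fun j => (1 <= j) && (j <= d)) J.

(* Main.v *)
Require Import Defs.
From mathcomp Require Import all_boot all_order all_algebra.
From mathcomp Require Import zify.
Set Implicit Arguments. Unset Strict Implicit. Unset Printing Implicit Defensive.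
Import Order.TTheory GRing.Theory Num.Theory.

Section SeqIns.
Variable A : Type.
Definition ins (i : nat) (x : A) (s : seq A) := take i s ++ x :: drop i s.
Definition del (i : nat) (s : seq A) := take i s ++ drop i.+1 s.

Lemma size_ins i x s : size (ins i x s) = (size s).+1.
Proof. rewrite /ins size_cat /= size_take size_drop; case: ltnP => ? ; lia. Qed.

Lemma size_del i s : i < size s -> size (del i s) = (size s).-1.
Proof. move=> h; rewrite /del size_cat size_take size_drop h; lia. Qed.

Lemma nth_ins d i x s j : i <= size s ->
  nth d (ins i x s) j = if j < i then nth d s j else if j == i then x else nth d s j.-1.
Proof.
move=> hi; rewrite /ins nth_cat size_take.
have -> : (if i < size s then i else size s) = i by case: ltnP => h //; lia.
case: ltnP => hj; first by rewrite nth_take.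
case: eqP => [->|hne]; first by rewrite subnn.
have -> : j - i = (j - i).-1.+1 by lia.
by rewrite /= nth_drop; congr nth; lia.
Qed.

Lemma nth_del d i s j : i < size s ->
  nth d (del i s) j = if j < i then nth d s j else nth d s j.+1.
Proof.
move=> hi; rewrite /del nth_cat size_take hi.
case: ltnP => hj; first by rewrite nth_take.
by rewrite nth_drop; congr nth; lia.
Qed.

Lemma del_ins i x s : i <= size s -> del i (ins i x s) = s.
Proof.
move=> hi; rewrite /del /ins take_size_cat ?size_take; last by case: ltnP => h //; lia.
rewrite drop_cat size_take.
have -> : (if i < size s then i else size s) = i by case: ltnP => h //; lia.
have -> : (i.+1 < i) = false by lia. by rewrite subSnn /= drop0 cat_take_drop.
Qed.

Lemma ins_del d i s : i < size s -> ins i (nth d s i) (del i s) = s.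
Proof.
move=> hi; rewrite /del /ins take_size_cat ?size_take ?hi //.
rewrite drop_cat size_take hi ltnn subnn drop0 -drop_nth //.
by rewrite cat_take_drop.
Qed.

Lemma all_ins P i x s : all P (ins i x s) = P x && all P s.
Proof. by rewrite /ins all_cat /= -{3}(cat_take_drop i s) all_cat; case: (P x); case: (all P _). Qed.
End SeqIns.

Lemma map_ins (A B : Type) (f : A -> B) i x s : map f (ins i x s) = ins i (f x) (map f s).
Proof. by rewrite /ins map_cat /= map_take map_drop. Qed.
Lemma map_del (A B : Type) (f : A -> B) i s : map f (del i s) = del i (map f s).
Proof. by rewrite /del map_cat map_take map_drop. Qed.
Lemma del_subseq (A : eqType) i (s : seq A) : subseq (del i s) s.
Proof.
have h : subseq (drop i.+1 s) (drop i s) by rewrite -add1n -drop_drop drop_subseq.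
by have := cat_subseq (subseq_refl (take i s)) h; rewrite cat_take_drop.
Qed.


Section Chains.
Variables (T : finType) (r : {set T} -> nat) (fl : pred {set T}).

Definition V (J : seq nat) (s : seq {set T}) :=
  [&& all fl s, [seq r G | G <- s] == J &
      sorted (fun A B : {set T} => A \proper B) s].

Lemma NJ_eq J m (e : size J = m) :
  NJ r fl J = #|[set c : m.-tuple {set T} | V J c]|.
Proof. by case: m / e. Qed.

Lemma V_size J s : V J s -> size s = size J.
Proof. by case/and3P=> _ /eqP <- _; rewrite size_map. Qed.

Lemma V_rk J s j : V J s -> j < size s -> r (nth set0 s j) = nth 0 J j.
Proof.
case/and3P=> _ /eqP <- _ hj.
by rewrite (nth_map set0) // .
Qed.

Lemma V_sorted J s j : V J s -> j.+1 < size s -> nth set0 s j \proper nth set0 s j.+1.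
Proof. by case/and3P=> _ _ /sortedP; apply. Qed.

Lemma V_fl J s j : V J s -> j < size s -> fl (nth set0 s j).
Proof. by case/and3P=> /allP h _ _ hj; apply/h/mem_nth. Qed.

Lemma tr_proper : transitive (fun A B : {set T} => A \proper B).
Proof. by move=> y x z; apply: proper_trans. Qed.

Variables (J0 : seq nat) (n k : nat).
Hypothesis hn : n <= size J0.
Hypothesis hsort : sorted ltn (ins n k J0).

Definition lo (c : seq {set T}) := if n is j.+1 then nth set0 c j else set0.
Definition hi (c : seq {set T}) := nth setT c n.

Lemma J'_lt i : i.+1 < (size J0).+1 -> nth 0 (ins n k J0) i < nth 0 (ins n k J0) i.+1.
Proof. by move=> h; move/sortedP: hsort; apply; rewrite size_ins. Qed.

Lemma lo_lt j : n = j.+1 -> nth 0 J0 j < k.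
Proof.
move=> e; have := @J'_lt j; rewrite !nth_ins // e ltnSn eqxx. rewrite ltnn; apply; lia.

Qed.

Lemma hi_lt : n < size J0 -> k < nth 0 J0 n.
Proof.
move=> h; have := @J'_lt n; rewrite !nth_ins // ltnn eqxx. have -> : (n.+1 < n) = false by lia.
have -> : (n.+1 == n) = false by lia.
by rewrite /=; apply; lia.
Qed.

Lemma F1 c X : V J0 c -> fl X -> r X = k -> lo c \subset X -> X \subset hi c ->
  V (ins n k J0) (ins n X c).
Proof.
move=> hc hX rX hlo hhi; have sc := V_size hc.
have hc' := hc; case/and3P: hc' => ac /eqP mc _.
apply/and3P; split.
- by rewrite all_ins hX ac.
- by rewrite map_ins mc rX.
apply/(sortedP set0) => i; rewrite size_ins => hi1.
rewrite !nth_ins ?sc //.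
case: (ltnP i.+1 n) => h1.
  have -> : i < n by lia.
  by apply: V_sorted hc _; lia.
case: (ltnP i n) => h2.
  have e : n = i.+1 by lia.
  rewrite e eqxx; rewrite properEneq; apply/andP; split.
    apply/eqP => eX; have := lo_lt e; rewrite -(V_rk hc); last by lia.
    by rewrite eX rX ltnn.
  by move: hlo; rewrite /lo e.
case: (eqVneq i n) => [ei|nei].
  subst i; have -> : (n.+1 == n) = false by lia.
  rewrite /= properEneq; apply/andP; split.
    apply/eqP => eX; have := hi_lt; rewrite -(V_rk hc); last by lia. 
    by rewrite -eX rX ltnn; move/(_ ltac:(lia)).
  by move: hhi; rewrite /hi (set_nth_default set0) //; lia.
have -> : (i.+1 == n) = false by lia.
have -> : i.+1.-1 = i.-1.+1 by lia.
by apply: V_sorted hc _; lia.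
Qed.

Lemma F2 c' : V (ins n k J0) c' ->
  [/\ V J0 (del n c'), fl (nth set0 c' n), r (nth set0 c' n) = k,
      lo (del n c') \subset nth set0 c' n & nth set0 c' n \subset hi (del n c')].
Proof.
move=> hc'; have sc := V_size hc'; rewrite size_ins in sc.
have hlt : n < size c' by lia.
have hc2 := hc'; case/and3P: hc2 => ac /eqP mc sc'.
split.
- apply/and3P; split.
  + by move: ac; rewrite -{1}(ins_del set0 hlt) all_ins => /andP[].
  + by rewrite map_del mc del_ins.
  + exact: (subseq_sorted tr_proper (del_subseq n c') sc').
- exact: V_fl hc' hlt.
- by rewrite (V_rk hc' hlt) nth_ins // ltnn eqxx.
- rewrite /lo; case E: n => [|j]; first exact: sub0set.
  rewrite nth_del; last by rewrite -E.
  rewrite ltnSn; apply: proper_sub; apply: (V_sorted hc'); lia.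
- rewrite /hi nth_del // ltnn.
  case: (ltnP n.+1 (size c')) => h.
    by rewrite (set_nth_default set0) //; apply: proper_sub; apply: V_sorted hc' h.
  by rewrite (nth_default setT) ?subsetT // size_del //; lia.
Qed.

Lemma F3 c : V J0 c -> lo c \subset hi c.
Proof.
move=> hc; have sc := V_size hc; rewrite /lo /hi.
case E: n => [|j]; first exact: sub0set.
case: (ltnP n (size c)) => h.
  rewrite (set_nth_default set0) -E //; apply: proper_sub.
  have -> : n = j.+1 by [].
  by apply: V_sorted hc _; lia.
by rewrite -E (nth_default setT) ?subsetT.
Qed.

Lemma r_lo c : V J0 c -> r (lo c) = if n is j.+1 then nth 0 J0 j else r set0.
Proof.
move=> hc; have sc := V_size hc; rewrite /lo.
case E: n => [|j] //; apply: V_rk hc _; lia.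
Qed.

Lemma r_hi c : V J0 c -> r (hi c) = if n < size J0 then nth 0 J0 n else r setT.
Proof.
move=> hc; have sc := V_size hc; rewrite /hi.
case: ltnP => h.
  by rewrite (set_nth_default set0) ?sc // (V_rk hc) ?sc.
by rewrite nth_default // sc.
Qed.

Lemma fl_hi c : fl setT -> V J0 c -> fl (hi c).
Proof.
move=> hT hc; have sc := V_size hc; rewrite /hi.
case: (ltnP n (size c)) => h.
  by rewrite (set_nth_default set0) //; apply: V_fl hc h.
by rewrite nth_default.
Qed.

End Chains.


Section Count.
Variables (T : finType) (r : {set T} -> nat) (fl : pred {set T}).
Variables (J0 : seq nat) (n k : nat).
Hypothesis hn : n <= size J0.
Hypothesis hsort : sorted ltn (ins n k J0).

Local Notation m := (size J0).

Lemma deltupleP (c : m.+1.-tuple {set T}) : size (del n c) == m.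
Proof. by rewrite size_del size_tuple //; lia. Qed.
Definition deltuple (c : m.+1.-tuple {set T}) : m.-tuple {set T} := Tuple (deltupleP c).

Lemma instupleP X (c : m.-tuple {set T}) : size (ins n X c) == m.+1.
Proof. by rewrite size_ins size_tuple. Qed.
Definition instuple X (c : m.-tuple {set T}) : m.+1.-tuple {set T} := Tuple (instupleP X c).

Definition Bset (c : seq {set T}) :=
  [set X | fl X && (r X == k) && (lo n c \subset X) && (X \subset hi n c)].

Lemma fiber_eq (c : m.-tuple {set T}) : V r fl J0 c ->
  [set c' : m.+1.-tuple {set T} | V r fl (ins n k J0) c' && (deltuple c' == c)]
  = (instuple ^~ c) @: Bset c.
Proof.
move=> hc; apply/setP => c'; rewrite inE; apply/idP/imsetP.
- case/andP => hc' /eqP ec.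
  have [h1 h2 h3 h4 h5] := F2 hn hsort hc'.
  have ed : del n c' = c by rewrite -ec.
  exists (nth set0 c' n).
    by rewrite inE h2 h3 eqxx -ed h4 h5.
  apply: val_inj => /=; rewrite -ed ins_del // size_tuple; lia.
- case=> X; rewrite inE => /andP[/andP[/andP[hX /eqP rX] hlo] hhi] ->.
  rewrite (F1 hn hsort hc hX rX hlo hhi) /=.
  by apply/eqP/val_inj => /=; rewrite del_ins // size_tuple.
Qed.

Lemma count_eq :
  #|[set c : m.+1.-tuple {set T} | V r fl (ins n k J0) c]| =
  \sum_(c in [set c : m.-tuple {set T} | V r fl J0 c]) #|Bset c|.
Proof.
rewrite -sum1_card (partition_big deltuple (fun c => c \in [set c : m.-tuple {set T} | V r fl J0 c])); last first.
  move=> c' hc'; have {}hc' : V r fl (ins n k J0) c' by move: hc'; rewrite inE.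
  by rewrite inE; have [] := F2 hn hsort hc'.
apply: eq_bigr => c hc; have {}hc : V r fl J0 c by move: hc; rewrite inE.
transitivity #|[set c' : m.+1.-tuple {set T} | V r fl (ins n k J0) c' && (deltuple c' == c)]|.
  rewrite -sum1_card; apply: eq_bigl => x; rewrite !inE //.
rewrite fiber_eq //; apply: card_in_imset => X Y _ _ /(congr1 (fun t => nth set0 (tval t) n)) /=.
by rewrite !nth_ins ?size_tuple // ltnn eqxx.
Qed.
End Count.


Section Mat.
Variables (T : finType) (M : matroid T).
Local Notation r := (mrank M).

Lemma r0 : r set0 = 0.
Proof. by have := mrank_card M set0; rewrite cards0; lia. Qed.

Lemma rU_le (A X : {set T}) : r (A :|: X) <= r A + #|X|.
Proof.
have := mrank_submod M A X; have := mrank_card M X; lia.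
Qed.

Lemma r_closure (A : {set T}) (s : seq T) : (forall e, e \in s -> r (e |: A) = r A) ->
  r (A :|: [set x in s]) = r A.
Proof.
elim: s => [|e s IH] h.
  have -> : A :|: [set x in [::]] = A by apply/setP => x; rewrite !inE orbF.
  by [].
have IH' := IH (fun x hx => h x (mem_behead (s := e :: s) hx)).
have he := h e (mem_head e s).
have := mrank_submod M (A :|: [set x in s]) (e |: A).
have -> : (A :|: [set x in s]) :|: (e |: A) = A :|: [set x in e :: s].
  by apply/setP => x; rewrite !inE; case: (x == e); case: (x \in A); case: (x \in s).
have := mrank_mono M (subsetIr (A :|: [set x in s]) (e |: A)).
have h1 : A \subset (A :|: [set x in s]) :&: (e |: A).
  by apply/subsetP => x hx; rewrite !inE hx orbT.
have := mrank_mono M h1.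
have := mrank_mono M (subsetUl A [set x in e :: s]).
rewrite IH' he; lia.
Qed.

Lemma r_closure_set A (X : {set T}) : (forall e, e \in X -> r (e |: A) = r A) -> r (A :|: X) = r A.
Proof.
move=> h; have -> : X = [set x in enum X] by apply/setP => x; rewrite inE mem_enum.
by apply: r_closure => e; rewrite mem_enum; apply: h.
Qed.

Definition cl (A : {set T}) := [set e | r (e |: A) == r A].

Lemma sub_cl (A : {set T}) : A \subset cl A.
Proof.
apply/subsetP => x hx; rewrite inE.
by have -> : x |: A = A by apply/setP => y; rewrite !inE; case: eqP => // ->.
Qed.

Lemma r_cl (A : {set T}) : r (cl A) = r A.
Proof.
have <- : A :|: cl A = cl A by apply/setUidPr/sub_cl.
by apply: r_closure_set => e; rewrite inE => /eqP.
Qed.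

Lemma r_add_le (A : {set T}) e : r A <= r (e |: A).
Proof. by apply: mrank_mono; apply: subsetU1. Qed.

Lemma flat_cl (A : {set T}) : is_flat M (cl A).
Proof.
apply/forallP => e; apply/implyP => he.
rewrite ltn_neqAle r_add_le andbT; apply/negP => /eqP h.
move: he; rewrite inE; apply/negP; rewrite negbK.
have h1 : e |: A \subset e |: cl A by apply: setUS; apply: sub_cl.
have := mrank_mono M h1; rewrite -h r_cl => h2.
by rewrite eqn_leq h2 r_add_le.
Qed.

Lemma cl_sub (A F : {set T}) : A \subset F -> is_flat M F -> cl A \subset F.
Proof.
move=> hAF /forallP hF; apply/subsetP => e; rewrite inE => /eqP he.
apply/negPn/negP => heF.
have := implyP (hF e) heF.
have := mrank_submod M (e |: A) F.
have -> : (e |: A) :|: F = e |: F.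
  by apply/setP => x; rewrite !inE; have := subsetP hAF x; case: (x == e); case: (x \in A); case: (x \in F) => // /(_ isT).
have : A \subset (e |: A) :&: F by rewrite subsetI subsetU1 hAF.
move/(mrank_mono M); rewrite he; lia.
Qed.

Lemma ext_indep (G H : {set T}) t : G \subset H -> t <= r H - r G ->
  exists E : {set T}, [/\ E \subset H, #|E| = t & r (G :|: E) = r G + t].
Proof.
move=> hGH; elim: t => [|t IH] ht.
  by exists set0; rewrite sub0set cards0 setU0 addn0.
have [E [hEH cE rE]] := IH (ltnW ht).
have [/existsP [e /andP [heH hne]] | hno] := boolP [exists e, (e \in H) && (r (e |: (G :|: E)) != r (G :|: E))].
  have heE : e \notin G :|: E.
    apply: contra hne => hin.
    have -> : e |: (G :|: E) = G :|: E by apply/setUidPr; rewrite sub1set.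
    by [].
  exists (e |: E); split.
  - by rewrite subUset sub1set heH hEH.
  - by rewrite cardsU1 cE; move: heE; rewrite !inE negb_or => /andP[_ ->].
  - have -> : G :|: (e |: E) = e |: (G :|: E) by apply/setP => y; rewrite !inE; case: (y == e); case: (y \in G).
    have := rU_le (G :|: E) [set e]; rewrite cards1 setUC.
    have := r_add_le (G :|: E) e. move: hne; rewrite rE; lia.
exfalso.
have h : r ((G :|: E) :|: H) = r (G :|: E).
  apply: r_closure_set => e he.
  apply/eqP; move: hno; rewrite negb_exists => /forallP /(_ e).
  by rewrite he /= negbK.
have := mrank_mono M (subsetUr (G :|: E) H).
rewrite h rE; lia.
Qed.

Lemma sub_indep (G E S : {set T}) : r (G :|: E) = r G + #|E| -> S \subset E ->
  r (G :|: S) = r G + #|S|.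
Proof.
move=> hE hSE; apply/eqP; rewrite eqn_leq rU_le /=.
have := rU_le (G :|: S) (E :\: S).
have -> : (G :|: S) :|: (E :\: S) = G :|: E.
  apply/setP => x; rewrite !inE; have := subsetP hSE x.
  by case: (x \in S); case: (x \in E); case: (x \in G) => // /(_ isT).
rewrite hE cardsD; have -> : E :&: S = S by apply/setIidPr.
have := subset_leq_card hSE; lia.
Qed.

Lemma flats_between (G H : {set T}) t : G \subset H -> is_flat M H -> t <= r H - r G ->
  'C(r H - r G, t) <=
  #|[set X | is_flat M X && (r X == r G + t) && (G \subset X) && (X \subset H)]|.
Proof.
move=> hGH hH ht.
have [E [hEH cE rE0]] := ext_indep hGH (leqnn _).
have rE : r (G :|: E) = r G + #|E| by rewrite cE.
rewrite -cE -cards_draws.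
rewrite -(@card_in_imset _ _ (fun S => cl (G :|: S))).
  apply: subset_leq_card; apply/subsetP => X /imsetP [S]; rewrite inE => /andP [hSE /eqP cS] ->.
  rewrite inE flat_cl r_cl (sub_indep rE hSE) cS eqxx /=.
  rewrite (subset_trans (subsetUl G S) (sub_cl _)) /=.
  by apply: cl_sub => //; rewrite subUset hGH (subset_trans hSE hEH).
move=> S S'; rewrite !inE => /andP [hSE /eqP cS] /andP [hSE' /eqP cS'] ecl.
apply/eqP; rewrite eqEcard cS cS' leqnn andbT.
have hU : G :|: (S :|: S') \subset cl (G :|: S).
  rewrite !subUset (subset_trans (subsetUr G S) (sub_cl _)) (subset_trans (subsetUl G S) (sub_cl _)) /=.
  by rewrite ecl (subset_trans (subsetUr G S') (sub_cl _)).
have := mrank_mono M hU; rewrite r_cl.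
rewrite (sub_indep rE hSE) (@sub_indep G E (S :|: S')) ?subUset ?hSE ?hSE' // => hle.
have hc : #|S :|: S'| <= #|S'| by lia.
have hS : S' \subset S :|: S' by apply: subsetUr.
have : S' == S :|: S' by rewrite eqEcard hS hc.
move/eqP => e; rewrite e; apply: subsetUl.
Qed.

End Mat.

Lemma bool_upper (T : finType) (G H : {set T}) t : G \subset H ->
  #|[set X : {set T} | true && (#|X| == #|G| + t) && (G \subset X) && (X \subset H)]|
  <= 'C(#|H| - #|G|, t).
Proof.
move=> hGH.
have -> : #|H| - #|G| = #|H :\: G| by rewrite cardsD; have -> : H :&: G = G by apply/setIidPr.
rewrite -cards_draws.
rewrite -(@card_in_imset _ _ (fun X => X :\: G)).
  apply: subset_leq_card; apply/subsetP => Y /imsetP [X]; rewrite inE => /andP [/andP [/andP [_ /eqP cX] hGX] hXH] ->.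
  rewrite inE setSD //= cardsD; have -> : X :&: G = G by apply/setIidPr.
  by rewrite cX; apply/eqP; lia.
move=> X Y; rewrite !inE => /andP [/andP [_ hGX] _] /andP [/andP [_ hGY] _] e.
apply/setP => x; have := congr1 (fun Z : {set T} => x \in Z) e; rewrite /= !inE.
have := subsetP hGX x; have := subsetP hGY x.
by case: (x \in G) => //= /(_ isT) -> /(_ isT) ->.
Qed.


Definition BoolM (T : finType) : matroid T.
refine (@Matroid T (fun A => #|A|) _ _ _).
- by move=> A.
- by move=> A B; apply: subset_leq_card.
- by move=> A B; rewrite cardsUI.
Defined.

Lemma flatB (T : finType) (X : {set T}) : is_flat (BoolM T) X.
Proof.
apply/forallP => e; apply/implyP => he /=.
by rewrite cardsU1 he.
Qed.

Lemma U_J_eq d J : U_J d J = NJ (fun A : {set 'I_d.+1} => #|A|) (fun _ => true) J.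
Proof. by []. Qed.

Section Step.
Variables (T : finType) (M : matroid T) (d : nat).
Hypothesis hT : mrank M [set: T] = d.+1.
Variables (J0 : seq nat) (n k : nat).
Hypothesis hn : n <= size J0.
Hypothesis hJ : index_set d (ins n k J0).

Let hsort : sorted ltn (ins n k J0). Proof. by case/andP: hJ. Qed.
Let hall : all (fun j => (1 <= j) && (j <= d)) (ins n k J0). Proof. by case/andP: hJ. Qed.

Definition aa := if n is j.+1 then nth 0 J0 j else 0.
Definition bb := if n < size J0 then nth 0 J0 n else d.+1.

Lemma hk : 1 <= k <= d.
Proof. by move: hall; rewrite all_ins => /andP[]. Qed.

Lemma a_lt : aa < k.
Proof.
rewrite /aa; case E: n => [|j]; first by have := hk; lia.
exact: (lo_lt hn hsort E).
Qed.

Lemma b_gt : k < bb.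
Proof.
rewrite /bb; case: (ltnP n (size J0)) => h; first exact: (hi_lt hn hsort h).
by have := hk; lia.
Qed.

Lemma N_step : 'C(bb - aa, k - aa) * N_J M J0 <= N_J M (ins n k J0).
Proof.
rewrite /N_J (NJ_eq _ _ (erefl (size J0))) (NJ_eq _ _ (size_ins n k J0)).
rewrite (count_eq (mrank M) (is_flat M) hn hsort) mulnC -sum_nat_const; apply: leq_sum => c.
rewrite inE => hc.
have hG := F3 hn hsort hc.
have hT0 : is_flat M setT by apply/forallP => e; rewrite inE.
have hH := fl_hi n hT0 hc.
have ra : mrank M (lo n c) = aa.
  by rewrite (r_lo hn hsort hc) /aa; case: (n) => // ; rewrite r0.
have rb : mrank M (hi n c) = bb by rewrite (r_hi n hc) /bb hT.
have ht : k - aa <= mrank M (hi n c) - mrank M (lo n c).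
  by rewrite ra rb; have := a_lt; have := b_gt; lia.
have := flats_between hG hH ht; rewrite ra rb.
have -> : aa + (k - aa) = k by have := a_lt; lia.
by [].
Qed.

Lemma U_step : 'C(bb - aa, k - aa) * U_J d J0 = U_J d (ins n k J0).
Proof.
rewrite !U_J_eq (NJ_eq _ _ (erefl (size J0))) (NJ_eq _ _ (size_ins n k J0)).
rewrite (count_eq (fun A : {set 'I_d.+1} => #|A|) (fun _ => true) hn hsort) mulnC -sum_nat_const.
apply: eq_bigr => c; rewrite inE => hc.
have hG := F3 hn hsort hc.
have ra : #|lo n c| = aa.
  by have := r_lo hn hsort hc; rewrite /aa => ->; case: (n) => //; rewrite cards0.
have rb : #|hi n c| = bb by have := r_hi n hc; rewrite /bb cardsT card_ord.
have ht : k - aa <= #|hi n c| - #|lo n c|.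
  by rewrite ra rb; have := a_lt; have := b_gt; lia.
have ek : aa + (k - aa) = k by have := a_lt; lia.
apply/eqP; rewrite eqn_leq; apply/andP; split.
  have := @flats_between _ (BoolM 'I_d.+1) _ _ _ hG (flatB _) ht.
  rewrite /= ra rb ek => h; apply: (leq_trans h); rewrite /Bset.
  by apply: subset_leq_card; apply/subsetP => X; rewrite !inE flatB.
have := bool_upper (k - aa) hG; rewrite ra rb ek => h; apply: leq_trans h.
by apply: subset_leq_card; apply/subsetP => X; rewrite !inE.
Qed.
End Step.

Local Open Scope ring_scope.

Lemma rat_step (N0 N1 U0 U1 C : nat) : (0 < C)%N -> (C * N0 <= N1)%N -> (C * U0)%N = U1 ->
  N0%:R / U0%:R <= N1%:R / U1%:R :> rat.
Proof.
move=> hC hN hU.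
have [U00|U0pos] := eqVneq U0 0%N.
  by rewrite U00 invr0 mulr0 divr_ge0 // ler0n.
have hC' : (C%:R : rat) != 0 by rewrite pnatr_eq0 -lt0n.
have -> : (N0%:R / U0%:R : rat) = (C * N0)%:R / U1%:R.
  by rewrite -hU !natrM -mulf_div divff // mul1r.
apply: ler_wpM2r; first by rewrite invr_ge0 ler0n.
by rewrite ler_nat.
Qed.

Lemma mem_ins (A : eqType) i (x y : A) s : (x \in ins i y s) = (x == y) || (x \in s).
Proof.
rewrite /ins mem_cat in_cons -{3}(cat_take_drop i s) mem_cat.
by case: (x == y); case: (x \in take i s); case: (x \in drop i s).
Qed.

Definition ratio (T : finType) (M : matroid T) d J : rat := (N_J M J)%:R / (U_J d J)%:R.

Lemma main_ind (T : finType) (M : matroid T) (d : nat) :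
  mrank M [set: T] = d.+1 ->
  forall p J J', (size J' - size J)%N = p -> index_set d J -> index_set d J' ->
  {subset J <= J'} -> ratio M d J <= ratio M d J'.
Proof.
move=> hT; elim=> [|p IH] J J' hp hJ hJ' hsub.
  have uJ : uniq J by apply: (sorted_uniq ltn_trans ltnn); case/andP: hJ.
  have [_ eqJ] := uniq_min_size uJ hsub (ltac:(lia) : (size J' <= size J)%N).
  have -> : J = J'.
    apply: (irr_sorted_eq ltn_trans ltnn) => //.
    - by case/andP: hJ.
    - by case/andP: hJ'.
  by [].
have [/hasP [k hkJ' hkJ] | hno] := boolP (has (fun x => x \notin J) J').
  pose n := index k J'.
  have hn : (n < size J')%N by rewrite index_mem.
  pose J'' := del n J'.
  have eJ' : J' = ins n k J''.
    by rewrite /J'' -[in RHS](nth_index 0 hkJ') ins_del.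
  have sJ'' : size J'' = (size J').-1 by rewrite size_del.
  have hJ'' : index_set d J''.
    case/andP: hJ' => h1 /allP h2; apply/andP; split.
      exact: (subseq_sorted ltn_trans (del_subseq _ _) h1).
    by apply/allP => x hx; apply: h2; apply: (mem_subseq (del_subseq n J')).
  have hsub'' : {subset J <= J''}.
    move=> x hx; have := hsub x hx; rewrite eJ' mem_ins.
    by case: eqVneq => [ex|] //= _; move: hkJ; rewrite -ex hx.
  apply: (le_trans (IH J J'' ltac:(lia) hJ hJ'' hsub'')).
  have hn' : (n <= size J'')%N by lia.
  have hJi : index_set d (ins n k J'') by rewrite -eJ'.
  rewrite /ratio eJ'.
  apply: (rat_step (C := 'C(bb d J'' n - aa J'' n, k - aa J'' n))).
  - by rewrite bin_gt0; have := a_lt hT hn' hJi; have := b_gt hT hn' hJi; lia.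
  - by have := N_step hT hn' hJi.
  - by have := U_step hT hn' hJi.
exfalso; move: hno; rewrite has_predC negbK => /allP hall.
have uJ' : uniq J' by apply: (sorted_uniq ltn_trans ltnn); case/andP: hJ'.
have := uniq_leq_size uJ' hall. by move: hp => hp'; rewrite -subn_eq0 hp'.
Qed.


Theorem lemma3p29 (T : finType) (M : matroid T) (d : nat) (J J' : seq nat) :
  loopless M -> mrank M [set: T] = d.+1 ->
  index_set d J -> index_set d J' -> {subset J <= J'} ->
  (N_J M J)%:R / (U_J d J)%:R <= (N_J M J')%:R / (U_J d J')%:R :> rat.
Proof.
move=> _ hT hJ hJ' hs.
exact: (main_ind hT (erefl _) hJ hJ' hs).
Qed.
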